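(* Fix $\varepsilon\in\{-1,1\}$. Let $P_0^{(0)},P_1^{(0)},P_2^{(0)}\in\mathbb H$ form a hyperbolic triangle, and for $k\ge1$ let $P_0^{(k)}P_1^{(k)}P_2^{(k)}$ be the Napoleonization (with sign $\varepsilon$) of $P_0^{(k-1)}P_1^{(k-1)}P_2^{(k-1)}$, where before each Napoleonization the vertices of the current triangle are labelled so that $\langle P_0\tilde\times P_1,P_2\rangle\ge0$. Then, as $k\to+\infty$, the triangles become more nearly equilateral and shrink to a point: for every $i\in\mathbb Z/3\mathbb Z$, $-\langle P^{(k)}_{i+1},P^{(k)}_{i+2}\rangle\to1$, i.e. the hyperbolic length $\operatorname{arccosh}(-\langle P^{(k)}_{i+1},P^{(k)}_{i+2}\rangle)$ of every side tends to $0$ (equivalently $\sqrt{1-2\langle P^{(k)}_{i+1},P^{(k)}_{i+2}\rangle}\to\sqrt3$).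
   Context: On $\mathbb R^3$ the Minkowski form is $\langle v,w\rangle=-v_1w_1+v_2w_2+v_3w_3$; $\mathbb H=\{P\in\mathbb R^3:\langle P,P\rangle=-1,\ P_1\ge1\}$, with distance $\operatorname{arccosh}(-\langle P,Q\rangle)$. The hyperbolic cross product is $v\tilde\times w:=J(v\times w)$ with $J=\mathrm{diag}(-1,1,1)$ and $\times$ the Euclidean cross product. The centroid of $A,B,C\in\mathbb H$ is $(A+B+C)/\sqrt{-\langle A+B+C,A+B+C\rangle}$. Napoleonization with sign $\varepsilon$ of a triangle $P_0P_1P_2$ (vertices labelled so that $\langle P_0\tilde\times P_1,P_2\rangle\ge0$): for $i\in\mathbb Z/3\mathbb Z$ let $Q_i=\frac{-\langle P_{i+1},P_{i+2}\rangle(P_{i+1}+P_{i+2})+\varepsilon\sqrt{1-2\langle P_{i+1},P_{i+2}\rangle}\,P_{i+1}\tilde\times P_{i+2}}{1-\langle P_{i+1},P_{i+2}\rangle}$ (so $P_{i+1}P_{i+2}Q_i$ is equilateral) and let $R_i$ be the centroid of $P_{i+1}P_{i+2}Q_i$, which equals $\frac{\sqrt{1-2\langle P_{i+1},P_{i+2}\rangle}(P_{i+1}+P_{i+2})+\varepsilon P_{i+1}\tilde\times P_{i+2}}{\sqrt3(1-\langle P_{i+1},P_{i+2}\rangle)}$; the Napoleonization is $R_0R_1R_2$. *)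

(* Defs.v *)
From Stdlib Require Import Reals.
Open Scope R_scope.

Definition vec : Type := (R * R * R)%type.
Definition c1 (v : vec) : R := fst (fst v).
Definition c2 (v : vec) : R := snd (fst v).
Definition c3 (v : vec) : R := snd v.

Definition vadd (v w : vec) : vec := (c1 v + c1 w, c2 v + c2 w, c3 v + c3 w).
Definition vscale (a : R) (v : vec) : vec := (a * c1 v, a * c2 v, a * c3 v).

Definition mink (v w : vec) : R := - (c1 v * c1 w) + c2 v * c2 w + c3 v * c3 w.

Definition inH (P : vec) : Prop := mink P P = -1 /\ 1 <= c1 P.

Definition cross (v w : vec) : vec :=
  (c2 v * c3 w - c3 v * c2 w, c3 v * c1 w - c1 v * c3 w, c1 v * c2 w - c2 v * c1 w).
Definition hcross (v w : vec) : vec :=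
  (- c1 (cross v w), c2 (cross v w), c3 (cross v w)).

Definition centroid (A B C : vec) : vec :=
  let S := vadd (vadd A B) C in vscale (/ sqrt (- mink S S)) S.

(* Apex Q of the equilateral htri A B Q on side AB, with sign eps. *)
Definition napQ (eps : R) (A B : vec) : vec :=
  vscale (/ (1 - mink A B))
    (vadd (vscale (- mink A B) (vadd A B))
          (vscale (eps * sqrt (1 - 2 * mink A B)) (hcross A B))).

Definition napR (eps : R) (A B : vec) : vec := centroid A B (napQ eps A B).

Definition htri : Type := (vec * vec * vec)%type.
Definition vtx (T : htri) (i : nat) : vec :=
  match i with
  | O => fst (fst T)
  | S O => snd (fst T)
  | _ => snd T
  end.

Definition orient (T : htri) : R := mink (hcross (vtx T 0) (vtx T 1)) (vtx T 2).

Definition napoleonize (eps : R) (T : htri) : htri :=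
  (napR eps (vtx T 1) (vtx T 2), napR eps (vtx T 2) (vtx T 0), napR eps (vtx T 0) (vtx T 1)).

Definition relabel (T L : htri) : Prop :=
  let a := vtx T 0 in let b := vtx T 1 in let c := vtx T 2 in
  L = (a, b, c) \/ L = (b, c, a) \/ L = (c, a, b) \/
  L = (a, c, b) \/ L = (c, b, a) \/ L = (b, a, c).

(* Main.v *)
Require Import Defs.
From Stdlib Require Import Reals Lra Lia Psatz Classical.
Open Scope R_scope.


Definition Wn (x0 x1 x2 : R) : R :=
  let a0 := 1+x0 in let a1 := 1+x1 in let a2 := 1+x2 in
  let u0 := 2+x0 in let u1 := 2+x1 in let u2 := 2+x2 in
  let sg := a0+a1+a2 in let S := x0+x1+x2 in let U := u0*u1*u2 in
  (3+2*sg)*3*U*(1+S) - (1/20)*S*S*3*U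
  - (1+S)*((2+a0)*(2+a0+sg)*(u1*u2) + (2+a1)*(2+a1+sg)*(u2*u0) + (2+a2)*(2+a2+sg)*(u0*u1)).

Definition Vp (x0 x1 x2 : R) : R :=
  let a0 := 1+x0 in let a1 := 1+x1 in let a2 := 1+x2 in
  let u0 := 2+x0 in let u1 := 2+x1 in let u2 := 2+x2 in
  let S := x0+x1+x2 in
  let e2 := u1*u2+u0*u2+u0*u1 in
  let D2 := 1+2*a0*a1*a2-a0*a0-a1*a1-a2*a2 in
  Wn x0 x1 x2 * Wn x0 x1 x2 - 3*D2*(e2*e2)*((1+S)*(1+S)).

Ltac posit := repeat (first [apply Rplus_le_le_0_compat | apply Rle_0_sqr | apply Rmult_le_pos]); try assumption; try lra.

Lemma Wn_nonneg x0 x1 x2 : 0 <= x0 -> 0 <= x1 -> 0 <= x2 -> 0 <= Wn x0 x1 x2.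
Proof.
  intros H0 H1 H2.
  replace (Wn x0 x1 x2) with (12*x2 + (74/5)*x2*x2 + (17/5)*x2*x2*x2 + 12*x1 + (188/5)*x1*x2 + (106/5)*x1*x2*x2 + (27/10)*x1*x2*x2*x2 + (74/5)*x1*x1 + (106/5)*x1*x1*x2 + (27/5)*x1*x1*x2*x2 + (17/5)*x1*x1*x1 + (27/10)*x1*x1*x1*x2 + 12*x0 + (188/5)*x0*x2 + (106/5)*x0*x2*x2 + (27/10)*x0*x2*x2*x2 + (188/5)*x0*x1 + (297/5)*x0*x1*x2 + (43/2)*x0*x1*x2*x2 + (37/20)*x0*x1*x2*x2*x2 + (106/5)*x0*x1*x1 + (43/2)*x0*x1*x1*x2 + (37/10)*x0*x1*x1*x2*x2 + (27/10)*x0*x1*x1*x1 + (37/20)*x0*x1*x1*x1*x2 + (74/5)*x0*x0 + (106/5)*x0*x0*x2 + (27/5)*x0*x0*x2*x2 + (106/5)*x0*x0*x1 + (43/2)*x0*x0*x1*x2 + (37/10)*x0*x0*x1*x2*x2 + (27/5)*x0*x0*x1*x1 + (37/10)*x0*x0*x1*x1*x2 + (17/5)*x0*x0*x0 + (27/10)*x0*x0*x0*x2 + (27/10)*x0*x0*x0*x1 + (37/20)*x0*x0*x0*x1*x2) by (unfold Wn; cbv zeta; field).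
  posit.
Qed.

Lemma Vp_nonneg x0 x1 x2 : 0 <= x0 -> 0 <= x1 -> 0 <= x2 -> 0 <= Vp x0 x1 x2.
Proof.
  intros H0 H1 H2.
  replace (Vp x0 x1 x2) with (288*(Rsqr (x0-x1) + Rsqr (x1-x2) + Rsqr (x2-x0)) + (3768/5)*((x0+x1+x2)*(Rsqr (x0-x1) + Rsqr (x1-x2) + Rsqr (x2-x0))) + 100*(x0*Rsqr(x1-x2)+x1*Rsqr(x2-x0)+x2*Rsqr(x0-x1)) + (16958/25)*(Rsqr(x0*x0-x1*x1)+Rsqr(x1*x1-x2*x2)+Rsqr(x2*x2-x0*x0)) + (44384/25)*(x0*x1*Rsqr(x0-x1)+x1*x2*Rsqr(x1-x2)+x2*x0*Rsqr(x2-x0)) + (57304/25)*(Rsqr(x0*x1-x1*x2)+Rsqr(x1*x2-x2*x0)+Rsqr(x2*x0-x0*x1)) + (3952/5)*((x0+x1+x2)*(Rsqr(x0*x1-x1*x2)+Rsqr(x1*x2-x2*x0)+Rsqr(x2*x0-x0*x1))) + 600*(x0*x1*x2*(Rsqr (x0-x1) + Rsqr (x1-x2) + Rsqr (x2-x0))) + (12116/25)*x2*x2*x2*x2*x2 + (1489/25)*x2*x2*x2*x2*x2*x2 + (28/5)*x1*x2*x2 + 1500*x1*x2*x2*x2*x2 + (11002/25)*x1*x2*x2*x2*x2*x2 + (1059/25)*x1*x2*x2*x2*x2*x2*x2 + (28/5)*x1*x1*x2 + (23412/25)*x1*x1*x2*x2 + (22787/25)*x1*x1*x2*x2*x2*x2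 + (906/5)*x1*x1*x2*x2*x2*x2*x2 + (1029/100)*x1*x1*x2*x2*x2*x2*x2*x2 + (26248/25)*x1*x1*x1*x2*x2*x2 + (1539/5)*x1*x1*x1*x2*x2*x2*x2 + (729/25)*x1*x1*x1*x2*x2*x2*x2*x2 + 1500*x1*x1*x1*x1*x2 + (22787/25)*x1*x1*x1*x1*x2*x2 + (1539/5)*x1*x1*x1*x1*x2*x2*x2 + (1887/50)*x1*x1*x1*x1*x2*x2*x2*x2 + (12116/25)*x1*x1*x1*x1*x1 + (11002/25)*x1*x1*x1*x1*x1*x2 + (906/5)*x1*x1*x1*x1*x1*x2*x2 + (729/25)*x1*x1*x1*x1*x1*x2*x2*x2 + (1489/25)*x1*x1*x1*x1*x1*x1 + (1059/25)*x1*x1*x1*x1*x1*x1*x2 + (1029/100)*x1*x1*x1*x1*x1*x1*x2*x2 + (28/5)*x0*x2*x2 + 1500*x0*x2*x2*x2*x2 + (11002/25)*x0*x2*x2*x2*x2*x2 + (1059/25)*x0*x2*x2*x2*x2*x2*x2 + (264/5)*x0*x1*x2 + (4384/5)*x0*x1*x2*x2*x2 + (36492/25)*x0*x1*x2*x2*x2*x2 + (10448/25)*x0*x1*x2*x2*x2*x2*x2 + (829/25)*x0*x1*x2*x2*x2*x2*x2*x2 + (28/5)*x0*x1*x1 + (1144/5)*x0*x1*x1*x2*x2 + (36026/25)*x0*x1*x1*x2*x2*x2 + (28116/25)*x0*x1*x1*x2*x2*x2*x2 + (10343/50)*x0*x1*x1*x2*x2*x2*x2*x2 + (999/100)*x0*x1*x1*x2*x2*x2*x2*x2*x2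 + (4384/5)*x0*x1*x1*x1*x2 + (36026/25)*x0*x1*x1*x1*x2*x2 + (36704/25)*x0*x1*x1*x1*x2*x2*x2 + (20939/50)*x0*x1*x1*x1*x2*x2*x2*x2 + (849/25)*x0*x1*x1*x1*x2*x2*x2*x2*x2 + 1500*x0*x1*x1*x1*x1 + (36492/25)*x0*x1*x1*x1*x1*x2 + (28116/25)*x0*x1*x1*x1*x1*x2*x2 + (20939/50)*x0*x1*x1*x1*x1*x2*x2*x2 + (2397/50)*x0*x1*x1*x1*x1*x2*x2*x2*x2 + (11002/25)*x0*x1*x1*x1*x1*x1 + (10448/25)*x0*x1*x1*x1*x1*x1*x2 + (10343/50)*x0*x1*x1*x1*x1*x1*x2*x2 + (849/25)*x0*x1*x1*x1*x1*x1*x2*x2*x2 + (1059/25)*x0*x1*x1*x1*x1*x1*x1 + (829/25)*x0*x1*x1*x1*x1*x1*x1*x2 + (999/100)*x0*x1*x1*x1*x1*x1*x1*x2*x2 + (28/5)*x0*x0*x2 + (23412/25)*x0*x0*x2*x2 + (22787/25)*x0*x0*x2*x2*x2*x2 + (906/5)*x0*x0*x2*x2*x2*x2*x2 + (1029/100)*x0*x0*x2*x2*x2*x2*x2*x2 + (28/5)*x0*x0*x1 + (1144/5)*x0*x0*x1*x2*x2 + (36026/25)*x0*x0*x1*x2*x2*x2 + (28116/25)*x0*x0*x1*x2*x2*x2*x2 + (10343/50)*x0*x0*x1*x2*x2*x2*x2*x2 + (999/100)*x0*x0*x1*x2*x2*x2*x2*x2*x2 + (23412/25)*x0*x0*x1*x1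 + (1144/5)*x0*x0*x1*x1*x2 + (17658/25)*x0*x0*x1*x1*x2*x2 + (59603/25)*x0*x0*x1*x1*x2*x2*x2 + (89447/100)*x0*x0*x1*x1*x2*x2*x2*x2 + (10751/100)*x0*x0*x1*x1*x2*x2*x2*x2*x2 + (1369/400)*x0*x0*x1*x1*x2*x2*x2*x2*x2*x2 + (36026/25)*x0*x0*x1*x1*x1*x2 + (59603/25)*x0*x0*x1*x1*x1*x2*x2 + (6859/5)*x0*x0*x1*x1*x1*x2*x2*x2 + (13029/50)*x0*x0*x1*x1*x1*x2*x2*x2*x2 + (1369/100)*x0*x0*x1*x1*x1*x2*x2*x2*x2*x2 + (22787/25)*x0*x0*x1*x1*x1*x1 + (28116/25)*x0*x0*x1*x1*x1*x1*x2 + (89447/100)*x0*x0*x1*x1*x1*x1*x2*x2 + (13029/50)*x0*x0*x1*x1*x1*x1*x2*x2*x2 + (4107/200)*x0*x0*x1*x1*x1*x1*x2*x2*x2*x2 + (906/5)*x0*x0*x1*x1*x1*x1*x1 + (10343/50)*x0*x0*x1*x1*x1*x1*x1*x2 + (10751/100)*x0*x0*x1*x1*x1*x1*x1*x2*x2 + (1369/100)*x0*x0*x1*x1*x1*x1*x1*x2*x2*x2 + (1029/100)*x0*x0*x1*x1*x1*x1*x1*x1 + (999/100)*x0*x0*x1*x1*x1*x1*x1*x1*x2 + (1369/400)*x0*x0*x1*x1*x1*x1*x1*x1*x2*x2 + (26248/25)*x0*x0*x0*x2*x2*x2 + (1539/5)*x0*x0*x0*x2*x2*x2*x2 + (729/25)*x0*x0*x0*x2*x2*x2*x2*x2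 + (4384/5)*x0*x0*x0*x1*x2 + (36026/25)*x0*x0*x0*x1*x2*x2 + (36704/25)*x0*x0*x0*x1*x2*x2*x2 + (20939/50)*x0*x0*x0*x1*x2*x2*x2*x2 + (849/25)*x0*x0*x0*x1*x2*x2*x2*x2*x2 + (36026/25)*x0*x0*x0*x1*x1*x2 + (59603/25)*x0*x0*x0*x1*x1*x2*x2 + (6859/5)*x0*x0*x0*x1*x1*x2*x2*x2 + (13029/50)*x0*x0*x0*x1*x1*x2*x2*x2*x2 + (1369/100)*x0*x0*x0*x1*x1*x2*x2*x2*x2*x2 + (26248/25)*x0*x0*x0*x1*x1*x1 + (36704/25)*x0*x0*x0*x1*x1*x1*x2 + (6859/5)*x0*x0*x0*x1*x1*x1*x2*x2 + (11181/25)*x0*x0*x0*x1*x1*x1*x2*x2*x2 + (4107/100)*x0*x0*x0*x1*x1*x1*x2*x2*x2*x2 + (1539/5)*x0*x0*x0*x1*x1*x1*x1 + (20939/50)*x0*x0*x0*x1*x1*x1*x1*x2 + (13029/50)*x0*x0*x0*x1*x1*x1*x1*x2*x2 + (4107/100)*x0*x0*x0*x1*x1*x1*x1*x2*x2*x2 + (729/25)*x0*x0*x0*x1*x1*x1*x1*x1 + (849/25)*x0*x0*x0*x1*x1*x1*x1*x1*x2 + (1369/100)*x0*x0*x0*x1*x1*x1*x1*x1*x2*x2 + 1500*x0*x0*x0*x0*x2 + (22787/25)*x0*x0*x0*x0*x2*x2 + (1539/5)*x0*x0*x0*x0*x2*x2*x2 + (1887/50)*x0*x0*x0*x0*x2*x2*x2*x2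 + 1500*x0*x0*x0*x0*x1 + (36492/25)*x0*x0*x0*x0*x1*x2 + (28116/25)*x0*x0*x0*x0*x1*x2*x2 + (20939/50)*x0*x0*x0*x0*x1*x2*x2*x2 + (2397/50)*x0*x0*x0*x0*x1*x2*x2*x2*x2 + (22787/25)*x0*x0*x0*x0*x1*x1 + (28116/25)*x0*x0*x0*x0*x1*x1*x2 + (89447/100)*x0*x0*x0*x0*x1*x1*x2*x2 + (13029/50)*x0*x0*x0*x0*x1*x1*x2*x2*x2 + (4107/200)*x0*x0*x0*x0*x1*x1*x2*x2*x2*x2 + (1539/5)*x0*x0*x0*x0*x1*x1*x1 + (20939/50)*x0*x0*x0*x0*x1*x1*x1*x2 + (13029/50)*x0*x0*x0*x0*x1*x1*x1*x2*x2 + (4107/100)*x0*x0*x0*x0*x1*x1*x1*x2*x2*x2 + (1887/50)*x0*x0*x0*x0*x1*x1*x1*x1 + (2397/50)*x0*x0*x0*x0*x1*x1*x1*x1*x2 + (4107/200)*x0*x0*x0*x0*x1*x1*x1*x1*x2*x2 + (12116/25)*x0*x0*x0*x0*x0 + (11002/25)*x0*x0*x0*x0*x0*x2 + (906/5)*x0*x0*x0*x0*x0*x2*x2 + (729/25)*x0*x0*x0*x0*x0*x2*x2*x2 + (11002/25)*x0*x0*x0*x0*x0*x1 + (10448/25)*x0*x0*x0*x0*x0*x1*x2 + (10343/50)*x0*x0*x0*x0*x0*x1*x2*x2 + (849/25)*x0*x0*x0*x0*x0*x1*x2*x2*x2 + (906/5)*x0*x0*x0*x0*x0*x1*x1 +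 (10343/50)*x0*x0*x0*x0*x0*x1*x1*x2 + (10751/100)*x0*x0*x0*x0*x0*x1*x1*x2*x2 + (1369/100)*x0*x0*x0*x0*x0*x1*x1*x2*x2*x2 + (729/25)*x0*x0*x0*x0*x0*x1*x1*x1 + (849/25)*x0*x0*x0*x0*x0*x1*x1*x1*x2 + (1369/100)*x0*x0*x0*x0*x0*x1*x1*x1*x2*x2 + (1489/25)*x0*x0*x0*x0*x0*x0 + (1059/25)*x0*x0*x0*x0*x0*x0*x2 + (1029/100)*x0*x0*x0*x0*x0*x0*x2*x2 + (1059/25)*x0*x0*x0*x0*x0*x0*x1 + (829/25)*x0*x0*x0*x0*x0*x0*x1*x2 + (999/100)*x0*x0*x0*x0*x0*x0*x1*x2*x2 + (1029/100)*x0*x0*x0*x0*x0*x0*x1*x1 + (999/100)*x0*x0*x0*x0*x0*x0*x1*x1*x2 + (1369/400)*x0*x0*x0*x0*x0*x0*x1*x1*x2*x2) by (unfold Vp, Wn, Rsqr; cbv zeta; field).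
  posit.
Qed.

Lemma sqrt3_pos : 0 < sqrt 3.
Proof. apply sqrt_lt_R0; lra. Qed.
Lemma sqrt3_sq : sqrt 3 * sqrt 3 = 3.
Proof. apply sqrt_sqrt; lra. Qed.

Lemma le_of_sq (p w : R) : 0 <= w -> p * p <= w * w -> p <= w.
Proof. intros. nra. Qed.

Lemma scalar_core a0 a1 a2 D :
  1 <= a0 -> 1 <= a1 -> 1 <= a2 -> 0 <= D ->
  D * D = 1 + 2*a0*a1*a2 - a0*a0 - a1*a1 - a2*a2 ->
  D / sqrt 3 * (/(1+a0) + /(1+a1) + /(1+a2)) +
  ((2+a0)*(2+a0+(a0+a1+a2))/(3*(1+a0)) + (2+a1)*(2+a1+(a0+a1+a2))/(3*(1+a1))
   + (2+a2)*(2+a2+(a0+a1+a2))/(3*(1+a2)))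
  <= 3 + 2*(a0+a1+a2) - ((a0+a1+a2)-3)*((a0+a1+a2)-3)/(20*((a0+a1+a2)-2)).
Proof.
  intros H0 H1 H2 HD HD2.
  set (x0 := a0 - 1). set (x1 := a1 - 1). set (x2 := a2 - 1).
  assert (E0 : a0 = 1 + x0) by (unfold x0; ring).
  assert (E1 : a1 = 1 + x1) by (unfold x1; ring).
  assert (E2 : a2 = 1 + x2) by (unfold x2; ring).
  assert (X0 : 0 <= x0) by (unfold x0; lra).
  assert (X1 : 0 <= x1) by (unfold x1; lra).
  assert (X2 : 0 <= x2) by (unfold x2; lra).
  clearbody x0 x1 x2. subst a0 a1 a2.
  pose proof sqrt3_pos as Hs. pose proof sqrt3_sq as Hs2.
  set (U := (2+x0)*(2+x1)*(2+x2)).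
  set (S := x0+x1+x2).
  set (e2 := (2+x1)*(2+x2)+(2+x0)*(2+x2)+(2+x0)*(2+x1)).
  assert (HU : 0 < U) by (unfold U; repeat apply Rmult_lt_0_compat; lra).
  assert (HS : 0 <= S) by (unfold S; lra).
  assert (He2 : 0 < e2) by (unfold e2; nra).
  set (W := Wn x0 x1 x2 / (3*U*(1+S))).
  set (p := D * e2 / (sqrt 3 * U)).
  assert (EW : 3 + 2*((1+x0)+(1+x1)+(1+x2)) - (((1+x0)+(1+x1)+(1+x2))-3)*(((1+x0)+(1+x1)+(1+x2))-3)/(20*(((1+x0)+(1+x1)+(1+x2))-2))
     - ((2+(1+x0))*(2+(1+x0)+((1+x0)+(1+x1)+(1+x2)))/(3*(1+(1+x0))) + (2+(1+x1))*(2+(1+x1)+((1+x0)+(1+x1)+(1+x2)))/(3*(1+(1+x1)))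
   + (2+(1+x2))*(2+(1+x2)+((1+x0)+(1+x1)+(1+x2)))/(3*(1+(1+x2)))) = W).
  { unfold W, Wn, U, S. cbv zeta. field. repeat split; lra. }
  assert (Ep : D / sqrt 3 * (/(1+(1+x0)) + /(1+(1+x1)) + /(1+(1+x2))) = p).
  { unfold p, U, e2. field. repeat split; lra. }
  assert (HW : 0 <= W).
  { unfold W. apply Rmult_le_pos. apply Wn_nonneg; auto.
    apply Rlt_le, Rinv_0_lt_compat. nra. }
  assert (HV := Vp_nonneg x0 x1 x2 X0 X1 X2).
  assert (Hpw : p * p <= W * W).
  { unfold p, W.
    replace (D * e2 / (sqrt 3 * U) * (D * e2 / (sqrt 3 * U))) with
      (3 * (D*D) * (e2*e2) * ((1+S)*(1+S)) / (9 * (U*U) * ((1+S)*(1+S)))).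
    2:{ transitivity (D*D*(e2*e2)/((sqrt 3 * sqrt 3)*(U*U))).
        rewrite Hs2. field. split; lra. field. split; lra. }
    replace (Wn x0 x1 x2 / (3 * U * (1 + S)) * (Wn x0 x1 x2 / (3 * U * (1 + S)))) with
      (Wn x0 x1 x2 * Wn x0 x1 x2 / (9 * (U*U) * ((1+S)*(1+S)))) by (field; lra).
    unfold Rdiv. apply Rmult_le_compat_r.
    { apply Rlt_le, Rinv_0_lt_compat. nra. }
    unfold Vp in HV. cbv zeta in HV. rewrite HD2.
    unfold e2, S. lra. }
  assert (p <= W) by (apply le_of_sq; auto).
  rewrite Ep. lra.
Qed.

Ltac vd := repeat match goal with v : vec |- _ => destruct v as [[? ?] ?] end;
  unfold mink, hcross, cross, vadd, vscale, Defs.c1, Defs.c2, Defs.c3 in *; simpl in *.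

Definition Xg (s e : R) (A B : vec) : vec := vadd (vscale s (vadd A B)) (vscale e (hcross A B)).

Lemma mink_sym v w : mink v w = mink w v.
Proof. vd. ring. Qed.

Lemma mink_scale2 k u : mink (vscale k u) (vscale k u) = k*k*mink u u.
Proof. vd. ring. Qed.

Lemma vscale_vscale a b v : vscale a (vscale b v) = vscale (a*b) v.
Proof. vd. f_equal; [f_equal|]; ring. Qed.

Lemma mink_Xg s e A B : mink (Xg s e A B) (Xg s e A B) =
  s*s*(mink A A + 2*mink A B + mink B B) + e*e*(mink A B * mink A B - mink A A * mink B B).
Proof. unfold Xg. vd. ring. Qed.

Lemma mink_Xg_AB s e A B : mink (Xg s e A B) (vadd A B) = s*(mink A A + 2*mink A B + mink B B).
Proof. unfold Xg. vd. ring. Qed.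

Lemma S_eq (s e : R) A B : 1 - (1-s*s)/2 <> 0 ->
  vadd (vadd A B) (vscale (/(1 - (1-s*s)/2)) (vadd (vscale (-((1-s*s)/2)) (vadd A B)) (vscale (e*s) (hcross A B))))
  = vscale (s/(1-(1-s*s)/2)) (Xg s e A B).
Proof. intro H. unfold Xg. vd. f_equal; [f_equal|]; field; lra. Qed.

Lemma inH_ge1 P Q : inH P -> inH Q -> 1 <= - mink P Q.
Proof.
  destruct P as [[p1 p2] p3]; destruct Q as [[q1 q2] q3].
  unfold inH. vd. intros [HP HP1] [HQ HQ1].
  assert (E1 : (p2*q2+p3*q3)*(p2*q2+p3*q3) <= (p1*q1-1)*(p1*q1-1)).
  { assert (0 <= (p2*q3-p3*q2)*(p2*q3-p3*q2)) by apply Rle_0_sqr.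
    assert (0 <= (p1-q1)*(p1-q1)) by apply Rle_0_sqr.
    assert ((p2*q2+p3*q3)*(p2*q2+p3*q3) <= (p2*p2+p3*p3)*(q2*q2+q3*q3)) by nra.
    assert (p2*p2+p3*p3 = p1*p1-1) by lra.
    assert (q2*q2+q3*q3 = q1*q1-1) by lra.
    nra. }
  assert (0 <= p1*q1-1) by nra.
  assert (p2*q2+p3*q3 <= p1*q1-1) by nra.
  lra.
Qed.

Lemma timelike_pos X Z : mink X X < 0 -> mink Z Z < 0 -> 0 < Defs.c1 Z -> mink X Z < 0 -> 0 < Defs.c1 X.
Proof.
  destruct X as [[r r0] r1]; destruct Z as [[r2 r3] r4].
  vd. intros HX HZ HZ1 HXZ.
  destruct (Rlt_or_le 0 r) as [h|h]; auto. exfalso.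
  assert (Hcs : (r0*r3+r1*r4)*(r0*r3+r1*r4) <= (r0*r0+r1*r1)*(r3*r3+r4*r4)).
  { pose proof (Rle_0_sqr (r0*r4-r1*r3)). unfold Rsqr in *. nra. }
  assert (r0*r3+r1*r4 < r*r2) by lra.
  assert (r*r2 <= 0) by nra.
  assert (r*r2*(r*r2) < (r0*r3+r1*r4)*(r0*r3+r1*r4)) by nra.
  assert ((r0*r0+r1*r1)*(r3*r3+r4*r4) <= (r*r)*(r2*r2)).
  { assert (0 <= r0*r0+r1*r1) by nra. assert (0 <= r3*r3+r4*r4) by nra. nra. }
  nra.
Qed.

Lemma revCS Y Z : mink Z Z < 0 -> mink Y Y * mink Z Z <= mink Y Z * mink Y Z.
Proof.
  intro HZ.
  set (W := hcross Y Z).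
  assert (E : mink Y Z * mink Y Z - mink Y Y * mink Z Z = mink W W) by (unfold W; vd; ring).
  assert (O : mink W Z = 0) by (unfold W; vd; ring).
  assert (0 <= mink W W).
  { clearbody W. clear E. destruct W as [[r r0] r1]; destruct Z as [[r2 r3] r4]. vd.
    assert (Hcs : (r0*r3+r1*r4)*(r0*r3+r1*r4) <= (r0*r0+r1*r1)*(r3*r3+r4*r4)).
  { pose proof (Rle_0_sqr (r0*r4-r1*r3)). unfold Rsqr in *. nra. }
    assert (r*r2 = r0*r3+r1*r4) by lra.
    pose proof (Rle_0_sqr r3). pose proof (Rle_0_sqr r4). pose proof (Rle_0_sqr r0). pose proof (Rle_0_sqr r1).
    unfold Rsqr in *.
    assert (0 < r2*r2) by lra.
    assert (r*r*(r2*r2) <= (r0*r0+r1*r1)*(r2*r2)).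
    { assert (r*r*(r2*r2) = (r0*r3+r1*r4)*(r0*r3+r1*r4)) by (rewrite <- H; ring).
      assert ((r0*r0+r1*r1)*(r3*r3+r4*r4) <= (r0*r0+r1*r1)*(r2*r2)).
      { apply Rmult_le_compat_l; lra. }
      lra. }
    assert (r*r <= r0*r0+r1*r1).
    { apply (Rmult_le_reg_r (r2*r2)); auto. }
    lra. }
  lra.
Qed.

Lemma napR_eq eps A B : inH A -> inH B -> eps*eps = 1 ->
  napR eps A B = vscale (/(sqrt 3 * (1 - mink A B))) (Xg (sqrt (1-2*mink A B)) eps A B).
Proof.
  intros HA HB He.
  pose proof (inH_ge1 A B HA HB) as Hc.
  assert (HAA : mink A A = -1) by (destruct HA; auto).
  assert (HBB : mink B B = -1) by (destruct HB; auto).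
  set (c := mink A B) in *.
  set (s := sqrt (1-2*c)).
  assert (Hs : 0 < s) by (unfold s; apply sqrt_lt_R0; lra).
  assert (Hss : s*s = 1-2*c) by (unfold s; apply sqrt_sqrt; lra).
  unfold napR, centroid, napQ. fold c. fold s.
  assert (Hc' : c = (1-s*s)/2) by lra.
  assert (ES : vadd (vadd A B) (vscale (/(1 - c)) (vadd (vscale (-c) (vadd A B)) (vscale (eps*s) (hcross A B))))
     = vscale (s/(1-c)) (Xg s eps A B)).
  { rewrite Hc'. apply S_eq. lra. }
  rewrite ES.
  rewrite mink_scale2, mink_Xg. fold c. rewrite HAA, HBB, He.
  assert (K : - (s / (1 - c) * (s / (1 - c)) * (s * s * (-1 + 2 * c + -1) + 1 * (c * c - -1 * -1)))
      = (sqrt 3 * s) * (sqrt 3 * s)).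
  { transitivity ((s*s) * (-((s*s)*(2*c-2) + (c*c-1))) / ((1-c)*(1-c))).
    field; lra. rewrite Hss.
    replace (sqrt 3 * s * (sqrt 3 * s)) with ((sqrt 3 * sqrt 3) * (s * s)) by ring.
    rewrite sqrt3_sq, Hss. field. lra. }
  rewrite K.
  rewrite sqrt_square.
  2:{ pose proof sqrt3_pos. nra. }
  rewrite vscale_vscale. f_equal. pose proof sqrt3_pos. field. split; lra.
Qed.

Lemma mink_AB_AB A B : mink (vadd A B) (vadd A B) = mink A A + 2*mink A B + mink B B.
Proof. vd. ring. Qed.

Lemma c1_vscale k v : Defs.c1 (vscale k v) = k * Defs.c1 v.
Proof. vd. ring. Qed.
Lemma c1_vadd v w : Defs.c1 (vadd v w) = Defs.c1 v + Defs.c1 w.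
Proof. vd. ring. Qed.

Lemma inH_of v : mink v v = -1 -> 0 < Defs.c1 v -> inH v.
Proof.
  destruct v as [[x y] z]. unfold inH. vd. intros H H1. split; auto.
  pose proof (Rle_0_sqr y). pose proof (Rle_0_sqr z). unfold Rsqr in *.
  assert (1 <= x*x) by lra. nra.
Qed.

Lemma napR_inH eps A B : inH A -> inH B -> eps*eps = 1 -> inH (napR eps A B).
Proof.
  intros HA HB He.
  rewrite napR_eq; auto.
  pose proof (inH_ge1 A B HA HB) as Hc.
  assert (HAA : mink A A = -1) by (destruct HA; auto).
  assert (HBB : mink B B = -1) by (destruct HB; auto).
  assert (HA1 : 1 <= Defs.c1 A) by (destruct HA; auto).
  assert (HB1 : 1 <= Defs.c1 B) by (destruct HB; auto).
  set (c := mink A B) in *.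
  set (s := sqrt (1-2*c)).
  assert (Hs : 0 < s) by (unfold s; apply sqrt_lt_R0; lra).
  assert (Hss : s*s = 1-2*c) by (unfold s; apply sqrt_sqrt; lra).
  pose proof sqrt3_pos. pose proof sqrt3_sq.
  assert (HXX : mink (Xg s eps A B) (Xg s eps A B) = -3*((1-c)*(1-c))).
  { rewrite mink_Xg. fold c. rewrite HAA, HBB, He, Hss. ring. }
  apply inH_of.
  - rewrite mink_scale2, HXX.
    replace (-3*((1-c)*(1-c))) with (-(sqrt 3 * sqrt 3)*((1-c)*(1-c))) by (rewrite H0; ring).
    field. split; lra.
  - rewrite c1_vscale. apply Rmult_lt_0_compat.
    + apply Rinv_0_lt_compat. apply Rmult_lt_0_compat; lra.
    + apply (timelike_pos _ (vadd A B)).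
      * rewrite HXX. nra.
      * rewrite mink_AB_AB. fold c. lra.
      * rewrite c1_vadd. lra.
      * rewrite mink_Xg_AB. fold c. rewrite HAA, HBB. nra.
Qed.

Lemma s_bound a s : 1 <= a -> 0 <= s -> s*s = 1+2*a -> s / sqrt 3 <= (2+a)/3.
Proof.
  intros Ha Hs Hss. pose proof sqrt3_pos. pose proof sqrt3_sq.
  assert (s * sqrt 3 <= 2 + a).
  { apply le_of_sq. lra.
    replace (s * sqrt 3 * (s * sqrt 3)) with ((s*s)*(sqrt 3 * sqrt 3)) by ring.
    rewrite Hss, H0. pose proof (Rle_0_sqr (a-1)). unfold Rsqr in *. nra. }
  replace (s / sqrt 3) with (s * sqrt 3 / (sqrt 3 * sqrt 3)) by (field; lra).
  rewrite H0. lra.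
Qed.

Lemma final_scalar a0 a1 a2 D s0 s1 s2 eps q N :
  1 <= a0 -> 1 <= a1 -> 1 <= a2 -> 0 <= D ->
  D * D = 1 + 2*a0*a1*a2 - a0*a0 - a1*a1 - a2*a2 ->
  0 <= s0 -> s0*s0 = 1+2*a0 -> 0 <= s1 -> s1*s1 = 1+2*a1 -> 0 <= s2 -> s2*s2 = 1+2*a2 ->
  (eps = 1 \/ eps = -1) ->
  q = /(sqrt 3 * (1+a0)) * (- s0 * (2+a0+(a0+a1+a2)) + eps * D)
    + /(sqrt 3 * (1+a1)) * (- s1 * (2+a1+(a0+a1+a2)) + eps * D)
    + /(sqrt 3 * (1+a2)) * (- s2 * (2+a2+(a0+a1+a2)) + eps * D) ->
  N * (3 + 2*(a0+a1+a2)) <= q * q ->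
  N <= 3 + 2*(a0+a1+a2) - ((a0+a1+a2)-3)*((a0+a1+a2)-3)/(20*((a0+a1+a2)-2)).
Proof.
  intros H0 H1 H2 HD HD2 Hs0 Hss0 Hs1 Hss1 Hs2 Hss2 He Hq HN.
  pose proof sqrt3_pos as Q3.
  pose proof (scalar_core a0 a1 a2 D H0 H1 H2 HD HD2) as SC.
  set (sg := a0+a1+a2) in *.
  set (M := 3 + 2*sg) in *.
  set (r := (sg-3)*(sg-3)/(20*(sg-2))) in *.
  assert (Hr0 : 0 <= r).
  { unfold r. apply Rmult_le_pos. pose proof (Rle_0_sqr (sg-3)). unfold Rsqr in *. lra.
    apply Rlt_le, Rinv_0_lt_compat. unfold sg. lra. }
  assert (HrM : r <= M).
  { unfold r, M. apply (Rmult_le_reg_r (20*(sg-2))). unfold sg; lra.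
    unfold Rdiv. rewrite Rmult_assoc, Rinv_l. 2:{ unfold sg; lra. }
    unfold sg. nra. }
  assert (Hk : forall a, 1 <= a -> 0 < /(sqrt 3 * (1+a))).
  { intros a Ha. apply Rinv_0_lt_compat. apply Rmult_lt_0_compat; lra. }
  assert (TB : forall a s, 1 <= a -> 0 <= s -> s*s = 1+2*a ->
     Rabs (/(sqrt 3 * (1+a)) * (- s * (2+a+sg) + eps * D))
     <= (2+a)*(2+a+sg)/(3*(1+a)) + D / sqrt 3 * /(1+a)).
  { intros a s Ha Hs Hss.
    pose proof (Hk a Ha) as Hka.
    rewrite Rabs_mult, (Rabs_pos_eq _ (Rlt_le _ _ Hka)).
    assert (Rabs (- s * (2+a+sg) + eps * D) <= s*(2+a+sg) + D).
    { apply Rabs_le. assert (0 <= s*(2+a+sg)) by (unfold sg in *; nra). destruct He; subst; lra. }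
    pose proof (s_bound a s Ha Hs Hss).
    assert (E1 : /(sqrt 3 * (1+a)) * (s*(2+a+sg) + D) = (s / sqrt 3) * ((2+a+sg)/(1+a)) + D / sqrt 3 * /(1+a)).
    { field. lra. }
    assert ((s / sqrt 3) * ((2+a+sg)/(1+a)) <= (2+a)/3 * ((2+a+sg)/(1+a))).
    { apply Rmult_le_compat_r; auto. apply Rmult_le_pos. unfold sg in *; lra. apply Rlt_le, Rinv_0_lt_compat; lra. }
    assert ((2+a)/3 * ((2+a+sg)/(1+a)) = (2+a)*(2+a+sg)/(3*(1+a))) by (field; lra).
    nra. }
  assert (Habs : Rabs q <= M - r).
  { rewrite Hq.
    eapply Rle_trans. apply Rabs_triang.
    eapply Rle_trans. apply Rplus_le_compat_r. apply Rabs_triang.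
    pose proof (TB a0 s0 H0 Hs0 Hss0). pose proof (TB a1 s1 H1 Hs1 Hss1). pose proof (TB a2 s2 H2 Hs2 Hss2).
    assert (D / sqrt 3 * (/(1+a0) + /(1+a1) + /(1+a2)) = D / sqrt 3 * /(1+a0) + D / sqrt 3 * /(1+a1) + D / sqrt 3 * /(1+a2)) by ring.
    lra. }
  assert (Hq2 : q * q <= (M - r) * (M - r)).
  { pose proof (Rabs_pos q) as Hpq. pose proof (Rsqr_abs q) as Hsq. unfold Rsqr in Hsq. rewrite Hsq. nra. }
  assert (HM : 0 < M) by (unfold M, sg; lra).
  assert (N * M <= (M - r) * (M - r)) by lra.
  assert (N * M <= (M - r) * M) by nra.
  apply (Rmult_le_reg_r M); auto.
Qed.

Definition sig (T : htri) : R :=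
  - mink (vtx T 1) (vtx T 2) - mink (vtx T 2) (vtx T 0) - mink (vtx T 0) (vtx T 1).

Lemma mink_sum3 u v w : mink (vadd (vadd u v) w) (vadd (vadd u v) w) =
  mink u u + mink v v + mink w w + 2*(mink u v + mink v w + mink w u).
Proof. vd. ring. Qed.

Lemma mink_lin3 k0 k1 k2 X0 X1 X2 Z :
  mink (vadd (vadd (vscale k0 X0) (vscale k1 X1)) (vscale k2 X2)) Z
  = k0*mink X0 Z + k1*mink X1 Z + k2*mink X2 Z.
Proof. vd. ring. Qed.

Lemma Xg_Z0 s e P0 P1 P2 : mink (Xg s e P1 P2) (vadd (vadd P0 P1) P2) =
  s*(mink P1 P0 + mink P1 P1 + mink P1 P2 + mink P2 P0 + mink P2 P1 + mink P2 P2) + e*mink (hcross P0 P1) P2.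
Proof. unfold Xg. vd. ring. Qed.
Lemma Xg_Z1 s e P0 P1 P2 : mink (Xg s e P2 P0) (vadd (vadd P0 P1) P2) =
  s*(mink P2 P0 + mink P2 P1 + mink P2 P2 + mink P0 P0 + mink P0 P1 + mink P0 P2) + e*mink (hcross P0 P1) P2.
Proof. unfold Xg. vd. ring. Qed.
Lemma Xg_Z2 s e P0 P1 P2 : mink (Xg s e P0 P1) (vadd (vadd P0 P1) P2) =
  s*(mink P0 P0 + mink P0 P1 + mink P0 P2 + mink P1 P0 + mink P1 P1 + mink P1 P2) + e*mink (hcross P0 P1) P2.
Proof. unfold Xg. vd. ring. Qed.

Lemma D2_id P0 P1 P2 :
  let g00 := mink P0 P0 in let g11 := mink P1 P1 in let g22 := mink P2 P2 in
  let g01 := mink P0 P1 in let g12 := mink P1 P2 in let g02 := mink P0 P2 in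
  mink (hcross P0 P1) P2 * mink (hcross P0 P1) P2 =
  - (g00*g11*g22 + 2*g01*g12*g02 - g00*g12*g12 - g11*g02*g02 - g22*g01*g01).
Proof. cbv zeta. vd. ring. Qed.

Lemma step eps P0 P1 P2 : (eps = 1 \/ eps = -1) -> inH P0 -> inH P1 -> inH P2 ->
  0 <= orient (P0, P1, P2) ->
  sig (napoleonize eps (P0,P1,P2)) <=
  sig (P0,P1,P2) - (sig (P0,P1,P2) - 3)*(sig (P0,P1,P2) - 3)/(40*(sig (P0,P1,P2) - 2)).
Proof.
  intros He H0 H1 H2 Hor.
  assert (Hee : eps*eps = 1) by (destruct He; subst; ring).
  unfold orient in Hor. simpl in Hor.
  unfold sig, napoleonize. simpl.
  pose proof (napR_inH eps P1 P2 H1 H2 Hee) as R0H.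
  pose proof (napR_inH eps P2 P0 H2 H0 Hee) as R1H.
  pose proof (napR_inH eps P0 P1 H0 H1 Hee) as R2H.
  set (R0 := napR eps P1 P2) in *.
  set (R1 := napR eps P2 P0) in *.
  set (R2 := napR eps P0 P1) in *.
  set (Y := vadd (vadd R0 R1) R2).
  set (Z := vadd (vadd P0 P1) P2).
  assert (g00 : mink P0 P0 = -1) by (destruct H0; auto).
  assert (g11 : mink P1 P1 = -1) by (destruct H1; auto).
  assert (g22 : mink P2 P2 = -1) by (destruct H2; auto).
  assert (h00 : mink R0 R0 = -1) by (destruct R0H; auto).
  assert (h11 : mink R1 R1 = -1) by (destruct R1H; auto).
  assert (h22 : mink R2 R2 = -1) by (destruct R2H; auto).
  pose proof (inH_ge1 _ _ H1 H2) as A0.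
  pose proof (inH_ge1 _ _ H2 H0) as A1.
  pose proof (inH_ge1 _ _ H0 H1) as A2.
  set (a0 := - mink P1 P2) in *.
  set (a1 := - mink P2 P0) in *.
  set (a2 := - mink P0 P1) in *.
  set (D := mink (hcross P0 P1) P2) in *.
  assert (HD2 : D * D = 1 + 2*a0*a1*a2 - a0*a0 - a1*a1 - a2*a2).
  { unfold D. rewrite D2_id. cbv zeta. rewrite g00, g11, g22.
    rewrite (mink_sym P0 P2). unfold a0, a1, a2. ring. }
  assert (HYY : mink Y Y = -3 - 2*(- mink R1 R2 - mink R2 R0 - mink R0 R1)).
  { unfold Y. rewrite mink_sum3, h00, h11, h22. ring. }
  assert (HZZ : mink Z Z = -3 - 2*(a0+a1+a2)).
  { unfold Z. rewrite mink_sum3, g00, g11, g22. unfold a0, a1, a2. ring. }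
  set (N := 3 + 2*(- mink R1 R2 - mink R2 R0 - mink R0 R1)).
  assert (Hcs : N * (3 + 2*(a0+a1+a2)) <= mink Y Z * mink Y Z).
  { pose proof (revCS Y Z) as C. rewrite HYY, HZZ in C. unfold N.
    assert (-3 - 2*(a0+a1+a2) < 0) by lra. specialize (C H). lra. }
  set (s0 := sqrt (1 + 2*a0)).
  set (s1 := sqrt (1 + 2*a1)).
  set (s2 := sqrt (1 + 2*a2)).
  assert (Hq : mink Y Z =
    /(sqrt 3 * (1+a0)) * (- s0 * (2+a0+(a0+a1+a2)) + eps * D)
    + /(sqrt 3 * (1+a1)) * (- s1 * (2+a1+(a0+a1+a2)) + eps * D)
    + /(sqrt 3 * (1+a2)) * (- s2 * (2+a2+(a0+a1+a2)) + eps * D)).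
  { unfold Y, R0, R1, R2.
    rewrite (napR_eq eps P1 P2 H1 H2 Hee), (napR_eq eps P2 P0 H2 H0 Hee), (napR_eq eps P0 P1 H0 H1 Hee).
    rewrite mink_lin3. unfold Z. rewrite Xg_Z0, Xg_Z1, Xg_Z2. fold D.
    replace (1 - 2 * mink P1 P2) with (1 + 2*a0) by (unfold a0; ring).
    replace (1 - 2 * mink P2 P0) with (1 + 2*a1) by (unfold a1; ring).
    replace (1 - 2 * mink P0 P1) with (1 + 2*a2) by (unfold a2; ring).
    fold s0 s1 s2.
    replace (1 - mink P1 P2) with (1 + a0) by (unfold a0; ring).
    replace (1 - mink P2 P0) with (1 + a1) by (unfold a1; ring).
    replace (1 - mink P0 P1) with (1 + a2) by (unfold a2; ring).
    rewrite g00, g11, g22.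
    rewrite (mink_sym P1 P0), (mink_sym P2 P1), (mink_sym P0 P2).
    unfold a0, a1, a2. ring. }
  assert (Hs0 : 0 <= s0) by apply sqrt_pos.
  assert (Hs1 : 0 <= s1) by apply sqrt_pos.
  assert (Hs2 : 0 <= s2) by apply sqrt_pos.
  assert (Hss0 : s0*s0 = 1+2*a0) by (apply sqrt_sqrt; lra).
  assert (Hss1 : s1*s1 = 1+2*a1) by (apply sqrt_sqrt; lra).
  assert (Hss2 : s2*s2 = 1+2*a2) by (apply sqrt_sqrt; lra).
  pose proof (final_scalar a0 a1 a2 D s0 s1 s2 eps (mink Y Z) N A0 A1 A2 Hor HD2
     Hs0 Hss0 Hs1 Hss1 Hs2 Hss2 He Hq Hcs) as F.
  unfold N in F.
  change (a0 - mink P2 P0 - mink P0 P1) with (a0 + a1 + a2).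
  unfold Rdiv in *.
  replace (/ (40 * (a0 + a1 + a2 - 2))) with (/2 * / (20 * (a0 + a1 + a2 - 2))).
  2:{ rewrite <- Rinv_mult. f_equal. ring. }
  lra.
Qed.

Lemma conv (t : nat -> R) : (forall k, 0 <= t k) ->
  (forall k, t (S k) <= t k - t k * t k / (40 * (1 + t k))) -> Un_cv t 0.
Proof.
  intros Hpos Hrec.
  assert (Hdec : forall k, t (S k) <= t k).
  { intro k. specialize (Hrec k). specialize (Hpos k).
    assert (0 <= t k * t k / (40 * (1 + t k))).
    { apply Rmult_le_pos. nra. apply Rlt_le, Rinv_0_lt_compat. lra. }
    lra. }
  assert (Hmono : forall N n, (N <= n)%nat -> t n <= t N).
  { intros N n Hn. induction Hn. lra. specialize (Hdec m). lra. }
  intros e He.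
  assert (Hex : exists N, t N < e).
  { apply NNPP. intro Hno.
    assert (Hall : forall n, e <= t n).
    { intro n. apply Rnot_lt_le. intro h. apply Hno. exists n. auto. }
    set (q := e * e / (40 * (1 + t O))).
    assert (Hq : 0 < q).
    { unfold q. apply Rmult_lt_0_compat. nra. apply Rinv_0_lt_compat. specialize (Hpos O). lra. }
    assert (Hstep : forall k, t (S k) <= t k - q).
    { intro k. specialize (Hrec k). pose proof (Hall k). pose proof (Hmono O k (Nat.le_0_l k)).
      pose proof (Hpos O).
      assert (q <= t k * t k / (40 * (1 + t k))).
      { unfold q. unfold Rdiv.
        apply Rle_trans with (t k * t k * / (40 * (1 + t O))).
        - apply Rmult_le_compat_r. apply Rlt_le, Rinv_0_lt_compat. lra. nra.
        - apply Rmult_le_compat_l. nra. apply Rinv_le_contravar. lra. lra. }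
      lra. }
    assert (Hlin : forall n, t n <= t O - INR n * q).
    { induction n. simpl. lra. rewrite S_INR. specialize (Hstep n). lra. }
    assert (Hq2 : 0 < q / (t O + 1)).
    { apply Rmult_lt_0_compat; auto. apply Rinv_0_lt_compat. specialize (Hpos O). lra. }
    destruct (archimed_cor1 _ Hq2) as [N [HN HN0]].
    pose proof (Hlin N). pose proof (Hpos N). pose proof (Hpos O).
    assert (HNp : 0 < INR N) by (apply lt_0_INR; lia).
    assert (t O + 1 < INR N * q).
    { unfold Rdiv in HN.
      apply (Rmult_lt_compat_l (INR N * (t O + 1))) in HN.
      2:{ apply Rmult_lt_0_compat; lra. }
      replace (INR N * (t O + 1) * / INR N) with (t O + 1) in HN by (field; lra).
      replace (INR N * (t O + 1) * (q * / (t O + 1))) with (INR N * q) in HN by (field; lra).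
      lra. }
    lra. }
  destruct Hex as [N HN]. exists N. intros n Hn.
  unfold R_dist. rewrite Rminus_0_r. rewrite Rabs_pos_eq by apply Hpos.
  pose proof (Hmono N n Hn). unfold ge in Hn. lra.
Qed.

Definition good (T : htri) : Prop := inH (vtx T 0) /\ inH (vtx T 1) /\ inH (vtx T 2).

Lemma relabel_good T L : good T -> relabel T L -> good L /\ sig L = sig T.
Proof.
  destruct T as [[a b] c]. unfold good, relabel, sig. simpl.
  intros [Ha [Hb Hc]] H.
  destruct H as [H|[H|[H|[H|[H|H]]]]]; subst L; simpl; (split; [tauto|]);
  repeat rewrite (mink_sym b a); repeat rewrite (mink_sym c b); repeat rewrite (mink_sym a c); ring.
Qed.

Lemma step_good eps L : (eps = 1 \/ eps = -1) -> good L -> 0 <= orient L ->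
  good (napoleonize eps L) /\
  sig (napoleonize eps L) <= sig L - (sig L - 3)*(sig L - 3)/(40*(sig L - 2)).
Proof.
  intros He HL Hor.
  assert (Hee : eps*eps = 1) by (destruct He; subst; ring).
  destruct L as [[P0 P1] P2]. destruct HL as [H0 [H1 H2]]. simpl in H0, H1, H2.
  split.
  - unfold good, napoleonize. simpl. repeat split; apply napR_inH; auto.
  - apply step; auto.
Qed.

Lemma sig_ge3 T : good T -> 3 <= sig T.
Proof.
  intros [H0 [H1 H2]]. unfold sig.
  pose proof (inH_ge1 _ _ H1 H2). pose proof (inH_ge1 _ _ H2 H0). pose proof (inH_ge1 _ _ H0 H1). lra.
Qed.

Theorem theorem1p2 (eps : R) (Heps : eps = 1 \/ eps = -1)
  (T : nat -> htri)
  (H0 : forall i : nat, (i < 3)%nat -> inH (vtx (T O) i))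
  (Hnondeg : orient (T O) <> 0)
  (Hstep : forall k : nat, exists L : htri,
      relabel (T k) L /\ 0 <= orient L /\ T (S k) = napoleonize eps L) :
  forall i j : nat, (i < 3)%nat -> (j < 3)%nat -> i <> j ->
    Un_cv (fun k => - mink (vtx (T k) i) (vtx (T k) j)) 1.
Proof.
  assert (G : forall k, good (T k) /\
     sig (T (S k)) <= sig (T k) - (sig (T k) - 3)*(sig (T k) - 3)/(40*(sig (T k) - 2))).
  { assert (Gk : forall k, good (T k)).
    { induction k.
      - unfold good. repeat split; apply H0; lia.
      - destruct (Hstep k) as [L [HL [Ho HT]]]. rewrite HT.
        destruct (relabel_good _ _ IHk HL) as [gL _].
        apply (step_good eps L Heps gL Ho). }
    intro k. split; auto.
    destruct (Hstep k) as [L [HL [Ho HT]]]. rewrite HT.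
    destruct (relabel_good _ _ (Gk k) HL) as [gL sL].
    rewrite <- sL. apply (step_good eps L Heps gL Ho). }
  set (t := fun k => sig (T k) - 3).
  assert (Ht : Un_cv t 0).
  { apply conv.
    - intro k. unfold t. pose proof (sig_ge3 _ (proj1 (G k))). lra.
    - intro k. unfold t. destruct (G k) as [_ h].
      replace (1 + (sig (T k) - 3)) with (sig (T k) - 2) by ring. lra. }
  intros i j Hi Hj Hij e He.
  destruct (Ht e He) as [N HN]. exists N. intros n Hn.
  specialize (HN n Hn). unfold R_dist in *. rewrite Rminus_0_r in HN.
  destruct (G n) as [[g0 [g1 g2]] _].
  unfold t, sig in HN.
  pose proof (inH_ge1 _ _ g1 g2). pose proof (inH_ge1 _ _ g2 g0). pose proof (inH_ge1 _ _ g0 g1).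
  assert (Hb : 1 <= - mink (vtx (T n) i) (vtx (T n) j) <= - mink (vtx (T n) 1) (vtx (T n) 2) - mink (vtx (T n) 2) (vtx (T n) 0) - mink (vtx (T n) 0) (vtx (T n) 1) - 2).
  { assert (i = 0 \/ i = 1 \/ i = 2)%nat as Hi' by lia.
    assert (j = 0 \/ j = 1 \/ j = 2)%nat as Hj' by lia.
    destruct Hi' as [ -> | [ -> | -> ] ]; destruct Hj' as [ -> | [ -> | -> ] ]; try lia;
    repeat rewrite (mink_sym (vtx (T n) 1) (vtx (T n) 0));
    repeat rewrite (mink_sym (vtx (T n) 2) (vtx (T n) 1));
    repeat rewrite (mink_sym (vtx (T n) 0) (vtx (T n) 2)); lra. }
  rewrite Rabs_pos_eq in HN by lra.
  rewrite Rabs_pos_eq by lra. lra.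
Qed.
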